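(* Let $c\in\mathbb{C}$ and $n\geq 1$. Then the automorphism group of the vertex operator algebra $\mathcal{V}_c^{\otimes n}$ is the symmetric group $S_n$, acting by permutation of tensor factors: $$\mathrm{Aut}\,\mathcal{V}_c^{\otimes n}=S_n .$$
   Context: $\mathcal{V}_c$ denotes the universal Virasoro vertex operator algebra of central charge $c$, generated by a weight-2 vector $\omega$ whose field $L(z)=Y(\omega,z)=\sum_{n\in\mathbb{Z}}L(n)z^{-n-2}$ satisfies $[L(m),L(n)]=(m-n)L(m+n)+\frac{c}{12}(m^3-m)\delta_{m+n,0}$. In $\mathcal{V}_c^{\otimes n}$ write $\omega_i$ for the copy of $\omega$ in the $i$-th tensor factor, with modes $L_i(m)$; the conformal vector of $\mathcal{V}_c^{\otimes n}$ is $\omega_1+\cdots+\omega_n$. $S_n$ acts by $\sigma\cdot L_{i_1}(m_1)\cdots L_{i_k}(m_k)\mathbb{1}=L_{\sigma(i_1)}(m_1)\cdots L_{\sigma(i_k)}(m_k)\mathbb{1}$. *)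

(* Defs.v *)
From HB Require Import structures.
From mathcomp Require Import all_boot all_order all_algebra all_fingroup.
From mathcomp Require Import reals.
From mathcomp Require Import complex.
Set Implicit Arguments. Unset Strict Implicit. Unset Printing Implicit Defensive.
Import Order.TTheory GRing.Theory Num.Theory.
Local Open Scope ring_scope.

Definition CC (R : realType) : fieldType := R[i].

Section VOA.
Variable F : fieldType.
Variable V : lmodType F.
(* Y u k v is the k-th mode  u_k v  (Y(u,z) = sum_k u_k z^{-k-1}) *)
Variable Y : V -> int -> V -> V.
Variable vac om : V.

Definition binZ (m : int) (j : nat) : F :=
  (\prod_(t < j) (m - t%:Z)%:~R) / (j`!)%:R.

Definition signZ (n : int) : F := (-1) ^+ `|n|%N.

(* Virasoro modes of the conformal vector: L(m) = om_(m+1) *)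
Definition Lmode (w : V) (m : int) (v : V) : V := Y w (m + 1) v.

Definition VOA_axioms (cV : F) : Prop :=
  (forall k (a : F) u u' v, Y (a *: u + u') k v = a *: Y u k v + Y u' k v) /\
  (forall k (a : F) u v v', Y u k (a *: v + v') = a *: Y u k v + Y u k v') /\
  (forall u v, exists N : int, forall k, N <= k -> Y u k v = 0) /\
  (forall k v, Y vac k v = (if k == -1 then v else 0)) /\
  (forall u, Y u (-1) vac = u) /\
  (forall u k, 0 <= k -> Y u k vac = 0) /\
  (* Jacobi (Borcherds) identity, in modes; the sums are finite by truncation *)
  (forall (u v w : V) (m n k : int), exists K : nat, forall N : nat, (K <= N)%N ->
     \sum_(j < N) binZ m j *: Y (Y u (n + j%:Z) v) (m + k - j%:Z) w =
     \sum_(j < N) ((-1) ^+ j * binZ n j) *: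
        (Y u (m + n - j%:Z) (Y v (k + j%:Z) w)
         - signZ n *: Y v (n + k - j%:Z) (Y u (m + j%:Z) w))) /\
  (forall (m k : int) v,
     Lmode om m (Lmode om k v) - Lmode om k (Lmode om m v) =
     (m - k)%:~R *: Lmode om (m + k) v
     + (cV / 12%:R * (m ^+ 3 - m)%:~R * (m + k == 0)%:R) *: v) /\
  (* L(-1)-derivative property: Y(L(-1)u, z) = d/dz Y(u, z) *)
  (forall u k v, Y (Lmode om (-1) u) k v = - (k%:~R *: Y u (k - 1) v)) /\
  (forall v, exists s : seq (int * V),
     v = \sum_(x <- s) x.2 /\ all (fun x => Lmode om 0 x.2 == x.1%:~R *: x.2) s) /\
  (forall n : int, exists s : seq V, forall v, Lmode om 0 v = n%:~R *: v ->
     exists a : 'I_(size s) -> F, v = \sum_(i < size s) a i *: s`_i) /\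
  (exists N0 : int, forall (n : int) v, n < N0 -> Lmode om 0 v = n%:~R *: v -> v = 0).

Definition is_VOA_aut (g : V -> V) : Prop :=
  (forall (a : F) u v, g (a *: u + v) = a *: g u + g v) /\
  bijective g /\
  (forall u k v, g (Y u k v) = Y (g u) k (g v)) /\
  g om = om.

End VOA.

Section TensorVir.
Variable F : fieldType.
Variable V : lmodType F.
Variable Y : V -> int -> V -> V.
Variable vac : V.
Variable n : nat.
Variable oms : 'I_n -> V.

(* L_{i_1}(m_1) ... L_{i_k}(m_k) 1  for s = [:: (i_1,m_1); ...; (i_k,m_k)] *)
Definition vir_mono (s : seq ('I_n * int)) : V :=
  foldr (fun p v => Lmode Y (oms p.1) p.2 v) vac s.

Definition pbw_le (p q : 'I_n * int) : bool :=
  (p.1 < q.1)%N || ((p.1 == q.1) && (p.2 <= q.2)).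

Definition pbw_adm (s : seq ('I_n * int)) : bool :=
  all (fun p => p.2 <= -2) s && sorted pbw_le s.

(* V is (a copy of) the universal Virasoro VOA V_c^{(x) n} with generators oms:
   the oms i give n mutually commuting Virasoro fields of central charge c,
   and the PBW monomials form a basis of V. *)
Definition is_univ_vir_tensor (c : F) : Prop :=
  (forall (i j : 'I_n) (m k : int) v,
     Lmode Y (oms i) m (Lmode Y (oms j) k v) - Lmode Y (oms j) k (Lmode Y (oms i) m v) =
     if i == j then
       (m - k)%:~R *: Lmode Y (oms i) (m + k) v
       + (c / 12%:R * (m ^+ 3 - m)%:~R * (m + k == 0)%:R) *: v
     else 0) /\
  (forall v, exists S : seq (seq ('I_n * int)), exists a : seq ('I_n * int) -> F,
     all pbw_adm S /\ v = \sum_(s <- S) a s *: vir_mono s) /\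
  (forall (S : seq (seq ('I_n * int))) (a : seq ('I_n * int) -> F),
     uniq S -> all pbw_adm S -> \sum_(s <- S) a s *: vir_mono s = 0 ->
     forall s, s \in S -> a s = 0).

Definition perm_mono (sg : 'S_n) (s : seq ('I_n * int)) : seq ('I_n * int) :=
  map (fun p => (sg p.1, p.2)) s.

End TensorVir.

(* Main.v *)
Require Import Defs.
From HB Require Import structures.
From mathcomp Require Import all_boot all_order all_algebra all_fingroup.
From mathcomp Require Import reals complex.
From Stdlib Require Import ClassicalEpsilon.
Import Order.TTheory GRing.Theory Num.Theory.
From mathcomp Require Import zify.
Set Implicit Arguments. Unset Strict Implicit. Unset Printing Implicit Defensive.
Local Open Scope ring_scope.

Section Lin.
Variable F : fieldType.
Definition islin (U W : lmodType F) (f : U -> W) :=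
  forall a u v, f (a *: u + v) = a *: f u + f v.
Variables (U W : lmodType F) (f : U -> W).
Hypothesis hf : islin f.
Lemma linD u v : f (u + v) = f u + f v.
Proof. by have := hf 1 u v; rewrite !scale1r. Qed.
Lemma lin0 : f 0 = 0.
Proof. by apply: (@addrI _ (f 0)); rewrite -linD !addr0. Qed.
Lemma linZ a u : f (a *: u) = a *: f u.
Proof. by rewrite -[a *: u]addr0 hf lin0 addr0. Qed.
Lemma linN u : f (- u) = - f u.
Proof. by rewrite -scaleN1r linZ scaleN1r. Qed.
Lemma linB u v : f (u - v) = f u - f v.
Proof. by rewrite linD linN. Qed.
Lemma lin_sum (I : Type) (r : seq I) (P : pred I) (G : I -> U) :
  f (\sum_(i <- r | P i) G i) = \sum_(i <- r | P i) f (G i).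
Proof. exact: (big_morph f linD lin0). Qed.
End Lin.

Lemma char0 (R : realType) (k : int) : (k%:~R : CC R) = 0 -> k = 0.
Proof.
move=> h. have : (k%:~R : R[i]) = 0 by exact: h.
move/eqP. rewrite (@intr_eq0 (R[i] : numDomainType)). by move/eqP.
Qed.

Lemma char0n (R : realType) (k : int) : k != 0 -> (k%:~R : CC R) != 0.
Proof. by move=> hk; apply/eqP => /char0 /eqP; rewrite (negbTE hk). Qed.

Section Main.
Variables (R : realType) (c : CC R) (n : nat) (V : lmodType (CC R)).
Variables (Y : V -> int -> V -> V) (vac : V) (oms : 'I_n -> V).
Hypothesis hVOA : VOA_axioms Y vac (\sum_(i < n) oms i) (n%:R * c).
Hypothesis hV : is_univ_vir_tensor Y vac oms c.

Local Notation F := (CC R).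
Local Notation X := ('I_n * int)%type.
Local Notation om := (\sum_(i < n) oms i).
Local Notation mono := (vir_mono Y vac oms).

Lemma Ylin1 k v : islin (fun u => Y u k v).
Proof. by case: hVOA => h _ a u u'; apply: h. Qed.
Lemma Ylin2 u k : islin (Y u k).
Proof. by case: hVOA => _ [h _] a v v'; apply: h. Qed.
Lemma Yvac k v : Y vac k v = (if k == -1 then v else 0).
Proof. by case: hVOA => _ [_ [_ [h _]]]. Qed.
Lemma Ycreate u : Y u (-1) vac = u.
Proof. by case: hVOA => _ [_ [_ [_ [h _]]]]. Qed.
Lemma Yann u k : 0 <= k -> Y u k vac = 0.
Proof. by case: hVOA => _ [_ [_ [_ [_ [h _]]]]]; apply: h. Qed.
Lemma Yjac (u v w : V) (m n0 k : int) : exists K : nat, forall N : nat, (K <= N)%N ->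
     \sum_(j < N) binZ F m j *: Y (Y u (n0 + j%:Z) v) (m + k - j%:Z) w =
     \sum_(j < N) ((-1) ^+ j * binZ F n0 j) *:
        (Y u (m + n0 - j%:Z) (Y v (k + j%:Z) w)
         - signZ F n0 *: Y v (n0 + k - j%:Z) (Y u (m + j%:Z) w)).
Proof. by case: hVOA => _ [_ [_ [_ [_ [_ [h _]]]]]]; apply: h. Qed.

Definition L i m v := Lmode Y (oms i) m v.
Definition L0 v := Lmode Y om 0 v.

Lemma Llin i m : islin (L i m).
Proof. exact: Ylin2. Qed.

Lemma Lcomm i j (m k : int) v : L i m (L j k v) = L j k (L i m v) +
   (if i == j then (m - k)%:~R *: L i (m + k) v
       + (c / 12%:R * (m ^+ 3 - m)%:~R * (m + k == 0)%:R) *: v else 0).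
Proof.
case: hV => h _; move/eqP: (h i j m k v); rewrite subr_eq addrC => /eqP.
by rewrite /L.
Qed.

Lemma L0E v : L0 v = \sum_(k < n) L k 0 v.
Proof. by rewrite /L0 /Lmode (lin_sum (Ylin1 _ _)). Qed.

Lemma Lvac i m : (-1 <= m) -> L i m vac = 0.
Proof. move=> h; rewrite /L /Lmode Yann //. lia. Qed.

Definition sumP (W : lmodType F) (f : seq X -> W) (P : seq (seq X * F)) :=
  \sum_(p <- P) p.2 *: f p.1.
Definition admP (P : seq (seq X * F)) := all (fun p => pbw_adm p.1) P.

Lemma lin_sumP (U W : lmodType F) (h : U -> W) f P : islin h ->
  h (sumP f P) = sumP (fun s => h (f s)) P.
Proof. by move=> hh; rewrite /sumP (lin_sum hh); apply: eq_bigr => p _; rewrite linZ. Qed.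

Lemma sum_delta1 (T : eqType) (U : seq T) x : uniq U -> x \in U ->
  \sum_(t <- U) ((x == t)%:R : F) = 1.
Proof.
elim: U => [//|a U IH] /= /andP [aU uU]; rewrite in_cons big_cons.
case: (x =P a) => [->|ne] /=.
  rewrite big1_seq ?addr0 // => t /= tU; case: (a =P t) => // at_.
  by move: aU; rewrite at_ tU.
by rewrite add0r; apply: IH.
Qed.

Definition coefP (P : seq (seq X * F)) t := \sum_(p <- P) (p.1 == t)%:R * p.2.

Lemma canonP (W : lmodType F) (f : seq X -> W) P (U : seq (seq X)) :
  uniq U -> {subset map fst P <= U} ->
  sumP f P = \sum_(t <- U) coefP P t *: f t.
Proof.
move=> uU sub.
under eq_bigr => t _ do rewrite /coefP scaler_suml.
rewrite exchange_big /sumP; apply: eq_big_seq => p pP; symmetry.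
transitivity (\sum_(i <- U) ((p.1 == i)%:R * p.2) *: f p.1).
  by apply: eq_bigr => t _; case: (p.1 =P t) => [->//|_]; rewrite !mul0r !scale0r.
rewrite -scaler_suml -mulr_suml sum_delta1 ?mul1r //; apply: sub; exact: map_f.
Qed.

Lemma ZP P : admP P -> sumP (fun s => mono s) P = 0 ->
  forall (W : lmodType F) (f : seq X -> W), sumP f P = 0.
Proof.
move=> aP z W f.
have uU : uniq (undup (map fst P)) by exact: undup_uniq.
have sU : {subset map fst P <= undup (map fst P)} by move=> x; rewrite mem_undup.
rewrite (canonP f uU sU); rewrite (canonP _ uU sU) in z.
case: hV => _ [_ hind].
have aU : all (@pbw_adm n) (undup (map fst P)).
  apply/allP => t; rewrite mem_undup => /mapP [p pP ->].
  by move/allP: aP => /(_ p pP).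
rewrite big1_seq // => t /andP [_ tU].
by rewrite (hind _ _ uU aU z t tU) scale0r.
Qed.

Definition negP (P : seq (seq X * F)) := [seq (p.1, - p.2) | p <- P].
Definition sclP a (P : seq (seq X * F)) := [seq (p.1, a * p.2) | p <- P].

Lemma sumP_cat (W : lmodType F) (f : seq X -> W) P1 P2 :
  sumP f (P1 ++ P2) = sumP f P1 + sumP f P2.
Proof. by rewrite /sumP big_cat. Qed.
Lemma sumP_scl (W : lmodType F) (f : seq X -> W) a P :
  sumP f (sclP a P) = a *: sumP f P.
Proof.
rewrite /sumP big_map scaler_sumr; apply: eq_bigr => p _ /=; by rewrite scalerA.
Qed.
Lemma sumP_neg (W : lmodType F) (f : seq X -> W) P :
  sumP f (negP P) = - sumP f P.
Proof.
rewrite /sumP big_map -sumrN; apply: eq_bigr => p _ /=; by rewrite scaleNr.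
Qed.
Lemma admP_cat P1 P2 : admP (P1 ++ P2) = admP P1 && admP P2.
Proof. by rewrite /admP all_cat. Qed.
Lemma admP_neg P : admP (negP P) = admP P.
Proof. by rewrite /admP all_map. Qed.
Lemma admP_scl a P : admP (sclP a P) = admP P.
Proof. by rewrite /admP all_map. Qed.

Lemma repP P1 P2 : admP P1 -> admP P2 ->
  sumP (fun s => mono s) P1 = sumP (fun s => mono s) P2 ->
  forall (W : lmodType F) (f : seq X -> W), sumP f P1 = sumP f P2.
Proof.
move=> a1 a2 e W f; apply/eqP; rewrite -subr_eq0 -sumP_neg -sumP_cat.
apply/eqP; apply: ZP; first by rewrite admP_cat admP_neg a1 a2.
by rewrite sumP_cat sumP_neg e subrr.
Qed.

Lemma spanP v : exists P, admP P /\ v = sumP (fun s => mono s) P.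
Proof.
case: hV => _ [hsp _]; have [S [a [aS ->]]] := hsp v.
exists [seq (s, a s) | s <- S]; split; first by rewrite /admP all_map.
by rewrite /sumP big_map.
Qed.

Definition wt (s : seq X) : int := \sum_(p <- s) (- p.2).

Lemma L0_L i m v : L0 (L i m v) = L i m (L0 v) - m%:~R *: L i m v.
Proof.
rewrite !L0E (lin_sum (Llin i m)).
under eq_bigr => k _ do rewrite Lcomm.
rewrite big_split /= -big_mkcond big_pred1_eq.
rewrite expr0n /= subr0 mulr0 mul0r scale0r addr0 sub0r add0r mulrNz scaleNr.
by [].
Qed.

Lemma wt_cons p s : wt (p :: s) = - p.2 + wt s.
Proof. by rewrite /wt big_cons. Qed.

Lemma mono_cons i m s : mono ((i, m) :: s) = L i m (mono s).
Proof. by []. Qed.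

Lemma L0vac : L0 vac = 0.
Proof. by rewrite /L0 /Lmode Yann. Qed.

Lemma L0lin : islin L0.
Proof. exact: Ylin2. Qed.

Lemma L0_mono s : L0 (mono s) = (wt s)%:~R *: mono s.
Proof.
elim: s => [|[i m] s IH]; first by rewrite /= L0vac /wt big_nil scale0r.
rewrite mono_cons L0_L IH linZ ?wt_cons; last exact: Llin.
by rewrite /= intrD intrN addrC scalerDl scaleNr.
Qed.

Lemma Lshift i m v e : L0 v = e%:~R *: v -> L0 (L i m v) = (e - m)%:~R *: L i m v.
Proof.
move=> h; rewrite L0_L h linZ; last exact: Llin.
by rewrite intrD intrN scalerDl scaleNr.
Qed.

Lemma wt_low s : all (fun p => p.2 <= -2) s -> Posz (2 * size s)%N <= wt s.
Proof.
elim: s => [|p s IH] /=; first by rewrite /wt big_nil.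
move=> /andP [hp hs]; rewrite wt_cons; have := IH hs; move: hp; set a := p.2; set b := wt s; rewrite /=; lia.
Qed.

Lemma adm_low (s : seq X) : @pbw_adm n s -> all (fun p => p.2 <= -2) s.
Proof. by case/andP. Qed.

Lemma wt_ge0 (s : seq X) : @pbw_adm n s -> 0 <= wt s.
Proof. move/adm_low/wt_low; lia. Qed.

Lemma eigP e v : L0 v = e%:~R *: v ->
  exists P, admP P /\ all (fun p => wt p.1 == e) P /\ v = sumP (fun s => mono s) P.
Proof.
move=> hv; have [P0 [a0 ev]] := spanP v.
pose P1 := [seq (p.1, (wt p.1 - e)%:~R * p.2) | p <- P0].
have a1 : admP P1 by rewrite /admP all_map.
have z1 : sumP (fun s => mono s) P1 = 0.
  rewrite /sumP big_map.
  have : L0 v - e%:~R *: v = 0 by rewrite hv subrr.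
  rewrite {1 2}ev (lin_sumP _ _ L0lin) /sumP scaler_sumr -sumrB => h; apply: etrans h.
  apply: eq_bigr => p _ /=.
  rewrite L0_mono scalerA scalerA -scalerBl; congr (_ *: _).
  by rewrite intrD intrN mulrBl mulrC [_ * p.2]mulrC.
have := ZP a1 z1 (fun s => ((wt s - e)%:~R)^-1 *: mono s).
rewrite /sumP big_map => z2.
exists [seq p <- P0 | wt p.1 == e]; split; first by rewrite /admP all_filter; apply/allP => p pP; apply/implyP => _; exact: (allP a0 p pP).
split; first by rewrite filter_all.
rewrite ev /sumP (bigID (fun p => wt p.1 == e)) /= big_filter.
rewrite -[RHS]addr0; congr (_ + _); rewrite -[RHS]z2 [LHS]big_mkcond.
apply: eq_bigr => p _ /=; case: (wt p.1 =P e) => [->|ne] /=.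
  by rewrite subrr mul0r scale0r.
rewrite scalerA mulrAC mulfV ?mul1r //; apply: char0n; apply/eqP => h.
by apply: ne; lia.
Qed.

Lemma NEG e v : e < 0 -> L0 v = e%:~R *: v -> v = 0.
Proof.
move=> he /eigP [P [aP [wP ->]]]; rewrite /sumP big1_seq // => p /andP [_ pP].
move/allP: wP => /(_ p pP) /eqP hw; move/allP: aP => /(_ p pP) /wt_ge0.
lia.
Qed.

Lemma mychoice (A B : Type) (P : A -> B -> Prop) :
  (forall x, exists y, P x y) -> exists f, forall x, P x (f x).
Proof.
move=> h; exists (fun x => proj1_sig (constructive_indefinite_description _ (h x))).
by move=> x; exact: (proj2_sig (constructive_indefinite_description _ (h x))).
Qed.

Lemma sum_delta (W : lmodType F) (f : 'I_n -> W) i :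
  \sum_(k < n) (k == i)%:R *: f k = f i.
Proof.
rewrite (bigD1 i) //= eqxx scale1r big1 ?addr0 // => k /negbTE ->.
by rewrite scale0r.
Qed.

Lemma omsE i : mono [:: (i, -2)] = oms i.
Proof. by rewrite mono_cons /L /Lmode Ycreate. Qed.

Lemma L0_oms i : L0 (oms i) = 2%:~R *: oms i.
Proof. by rewrite -omsE L0_mono /wt big_cons big_nil. Qed.

Lemma oms_indep (x : 'I_n -> F) : \sum_(k < n) x k *: oms k = 0 -> forall i, x i = 0.
Proof.
move=> h i; case: hV => _ [_ hind].
pose S : seq (seq X) := [seq [:: (k, -2)] | k <- index_enum 'I_n].
pose a := fun s : seq X => if s is [:: p] then x p.1 else 0.
have uS : uniq S.
  rewrite map_inj_uniq ?index_enum_uniq // => k k' [] //.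
have aS : all (@pbw_adm n) S by rewrite all_map; apply/allP.
have hS : \sum_(s <- S) a s *: mono s = 0.
  by rewrite big_map; rewrite -[RHS]h; apply: eq_bigr => k _; rewrite omsE.
have := hind S a uS aS hS [:: (i, -2)]; apply.
by apply/mapP; exists i; rewrite ?mem_index_enum.
Qed.

Lemma oms_neq0 i : oms i != 0.
Proof.
apply/eqP => h.
have h2 : \sum_(k < n) ((k == i)%:R : F) *: oms k = 0 by rewrite sum_delta.
by have := oms_indep h2 i; rewrite eqxx => /eqP; rewrite oner_eq0.
Qed.

Lemma wt2 (s : seq X) : @pbw_adm n s -> wt s = 2 -> exists j, s = [:: (j, -2)].
Proof.
case: s => [|[j m] s]; first by rewrite /wt big_nil.
move=> /adm_low /= /andP [hm hs]; rewrite wt_cons /= => hw.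
have := wt_low hs; case: s hs hw => [|q s] hs hw.
  by move=> _; exists j; congr [:: (_, _)]; move: hw; rewrite /wt big_nil; lia.
by rewrite /=; move: hw hm; set b := wt _; lia.
Qed.

Lemma eig2 v : L0 v = 2%:~R *: v -> exists a : 'I_n -> F, v = \sum_(k < n) a k *: oms k.
Proof.
move=> /eigP [P [aP [wP ->]]]; elim: P aP wP => [|p P IH] /=.
  by move=> _ _; exists (fun _ => 0); rewrite /sumP big_nil big1 // => k _; rewrite scale0r.
move=> /andP [ap aP] /andP [/eqP wp wP]; have [a ha] := IH aP wP.
have [j hj] := wt2 ap wp.
exists (fun k => a k + (k == j)%:R * p.2).
rewrite /sumP big_cons -/(sumP _ P) ha hj omsE.
under [RHS]eq_bigr => k _ do rewrite scalerDl -scalerA.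
by rewrite big_split /= sum_delta addrC.
Qed.

Lemma griess i j : Y (oms i) 1 (oms j) = if i == j then 2%:~R *: oms j else 0.
Proof.
have := Lcomm i j 0 (-2) vac; rewrite (@Lvac i 0) // (lin0 (Llin _ _)) add0r.
rewrite /L /Lmode /= Ycreate => ->; case: (i =P j) => [->|] //.
rewrite mulr0 scale0r addr0; have -> : (0 - 2 + 1 : int) = -1 by []. have -> : (0 - -2 : int) = 2 by []. by rewrite Ycreate.
Qed.

Lemma aut_vac g : is_VOA_aut Y om g -> g vac = vac.
Proof.
move=> [glin [[h gh hg] [gY gom]]].
have := gY vac (-1) (h vac); rewrite Yvac eqxx hg Ycreate => <-.
by [].
Qed.

Lemma aut_L0 g : is_VOA_aut Y om g -> forall x, g (L0 x) = L0 (g x).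
Proof. by move=> [_ [_ [gY gom]]] x; rewrite /L0 /Lmode gY gom. Qed.

Lemma aut_perm g : is_VOA_aut Y om g ->
  exists sg : 'S_n, forall s, g (mono s) = mono (perm_mono sg s).
Proof.
move=> hg; have gv := aut_vac hg; have gL0 := aut_L0 hg.
case: (hg) => [glin [[h gh hg'] [gY gom]]].
have gl : islin g by exact: glin.
have ha : forall i, exists a : 'I_n -> F, g (oms i) = \sum_(k < n) a k *: oms k.
  move=> i; apply: eig2; by rewrite -gL0 L0_oms (linZ gl).
have [A hA] := mychoice ha.
have hG : forall i j k, A i k * A j k = (i == j)%:R * A j k.
  move=> i j k; have := griess i j; move/(congr1 g); rewrite gY !hA.
  rewrite (lin_sum (Ylin1 _ _)).
  under eq_bigr => k' _ do rewrite (linZ (Ylin1 _ _)) (lin_sum (Ylin2 _ _)).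
  under eq_bigr => k' _ do under eq_bigr => l _ do rewrite (linZ (Ylin2 _ _)) griess.
  move=> e.
  have e2 : \sum_(k0 < n) (A i k0 * A j k0 * 2%:~R - (i == j)%:R * 2%:~R * A j k0) *: oms k0 = 0.
    move: e; case: (i =P j) => [<-|ne].
      rewrite (linZ gl) hA scaler_sumr => e; rewrite -[RHS](subrr (\sum_(k0 < n) A i k0 *: (\sum_(l < n) A i l *: (if k0 == l then 2%:~R *: oms l else 0)))).
      rewrite {2}e -sumrB; apply: eq_bigr => k0 _.
      rewrite mulr1n mul1r scalerBl; congr (_ - _); last by rewrite !scalerA.
      rewrite (bigD1 k0) //= eqxx big1 ?addr0 ?scalerA ?mulrA //.
      by move=> l /negbTE; rewrite eq_sym => ->; rewrite scaler0.
    rewrite (lin0 gl) => e; rewrite -[RHS]e; apply: eq_bigr => k0 _.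
    rewrite mulr0n mul0r mul0r subr0 (bigD1 k0) //= eqxx big1 ?addr0 ?scalerA ?mulrA //.
    by move=> l /negbTE; rewrite eq_sym => ->; rewrite scaler0.
  have h2 := oms_indep e2 k.
  apply: (@mulIf _ 2%:~R); first exact: char0n.
  rewrite [RHS]mulrAC; apply/eqP; rewrite -subr_eq0; exact/eqP.
have hS : forall k, \sum_(i < n) A i k = 1.
  move=> k.
  have e : \sum_(k0 < n) (\sum_(i < n) A i k0 - 1) *: oms k0 = 0.
    under eq_bigr => k0 _ do rewrite scalerBl scaler_suml.
    rewrite sumrB exchange_big /=.
    under [X in _ - X]eq_bigr => k0 _ do rewrite scale1r.
    rewrite -[X in _ - X]gom (lin_sum gl); apply/eqP; rewrite subr_eq0; apply/eqP.
    by apply: eq_bigr => i _; rewrite hA.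
  by have := oms_indep e k; move/eqP; rewrite subr_eq0 => /eqP.
have ht : forall k, exists i, A i k = 1 /\ forall j, j != i -> A j k = 0.
  move=> k; have [i hi] : exists i, A i k != 0.
    apply/existsP; apply: contraT; rewrite negb_exists => /forallP h0.
    have := hS k; rewrite big1 => [|i _]; last by apply/eqP; rewrite -[_ == _]negbK h0.
    by move/eqP; rewrite eq_sym oner_eq0.
  have i1 : A i k = 1.
    have := hG i i k; rewrite eqxx mulr1n mul1r => /eqP; rewrite -subr_eq0.
    rewrite -{3}[A i k]mulr1 -mulrBr.
    by rewrite mulf_eq0 (negbTE hi) /= subr_eq0 => /eqP.
  exists i; split => // j nj; have := hG j i k; rewrite i1 mulr1 (negbTE nj) mulr0n mul0r //.
have [tau htau] := mychoice ht.
have gT : forall i, g (oms i) = \sum_(k < n) (tau k == i)%:R *: oms k.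
  move=> i; rewrite hA; apply: eq_bigr => k _; case: (htau k) => h1 h2.
  by case: (tau k =P i) => [<-|/eqP ne]; rewrite ?h1 ?h2 // eq_sym.
have hsurj : forall i, exists k, tau k = i.
  move=> i; case: (pickP (fun k => tau k == i)) => [k /eqP hk|h0]; first by exists k.
  have : g (oms i) = 0 by rewrite gT big1 // => k _; rewrite h0 scale0r.
  rewrite -(lin0 gl) => /(can_inj gh).
  by move/eqP; rewrite (negbTE (oms_neq0 i)).
have [sig hsig] := mychoice hsurj.
have sinj : injective sig by move=> i i' e; rewrite -(hsig i) -(hsig i') e.
exists (perm sinj).
have gO : forall i, g (oms i) = oms (perm sinj i).
  move=> i; rewrite gT.
  have tauE : forall k, tau k = ((perm sinj)^-1)%g k.
    move=> k; rewrite -{1}(permKV (perm sinj) k) permE hsig //.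
  under eq_bigr => k _ do rewrite tauE -(inj_eq (@perm_inj _ (perm sinj))) permKV.
  by rewrite sum_delta.
elim => [|[i m] s IH] //=.
by rewrite -/(mono s) -/(mono (perm_mono _ s)) -IH /Lmode gY gO.
Qed.

Lemma faithful (sg tau : 'S_n) :
  (forall s, mono (perm_mono sg s) = mono (perm_mono tau s)) -> sg = tau.
Proof.
move=> h; apply/permP => i; have e : oms (sg i) = oms (tau i) by rewrite -!omsE; exact: (h [:: (i, -2)]).
apply/eqP; apply: contraT => ne.
have e2 : \sum_(k < n) ((k == sg i)%:R - (k == tau i)%:R) *: oms k = 0.
  under eq_bigr => k _ do rewrite scalerBl.
  by rewrite sumrB !sum_delta e subrr.
have := oms_indep e2 (sg i); rewrite eqxx (negbTE ne) mulr1n mulr0n subr0.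
by move/eqP; rewrite oner_eq0.
Qed.

Section Perm.
Variable sg : 'S_n.

Definition monoS s := mono (perm_mono sg s).
Definition gP v := proj1_sig (constructive_indefinite_description _ (spanP v)).
Definition gs v := sumP monoS (gP v).

Lemma gP_spec v : admP (gP v) /\ v = sumP (fun s => mono s) (gP v).
Proof. exact: (proj2_sig (constructive_indefinite_description _ (spanP v))). Qed.

Lemma gdef P : admP P -> gs (sumP (fun s => mono s) P) = sumP monoS P.
Proof.
move=> aP; have [a0 e] := gP_spec (sumP (fun s => mono s) P).
by rewrite /gs; apply: repP => //; rewrite -e.
Qed.

Lemma glin : islin gs.
Proof.
move=> a u v; have [Pu [au ->]] := spanP u; have [Pv [av ->]] := spanP v.
rewrite -sumP_scl -sumP_cat gdef ?admP_cat ?admP_scl ?au ?av //.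
by rewrite sumP_cat sumP_scl !gdef.
Qed.

Lemma gadm t : @pbw_adm n t -> gs (mono t) = monoS t.
Proof.
move=> at_; have := gdef (P := [:: (t, 1)]); rewrite /sumP !big_seq1 !scale1r.
by apply; rewrite /admP /= at_.
Qed.

Lemma wt_perm s : wt (perm_mono sg s) = wt s.
Proof. by rewrite /wt big_map. Qed.

Lemma gW x e : L0 x = e%:~R *: x -> L0 (gs x) = e%:~R *: gs x.
Proof.
move=> /eigP [P [aP [wP ->]]]; rewrite gdef // (lin_sumP _ _ L0lin) /sumP scaler_sumr.
apply: eq_big_seq => p pP; rewrite /monoS L0_mono wt_perm.
by move/allP: wP => /(_ p pP) /eqP ->; rewrite !scalerA mulrC.
Qed.

Definition Q (w : int) i m := forall x, L0 x = (w + m)%:~R *: x ->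
  gs (L i m x) = L (sg i) m (gs x).

Lemma Qtriv w i m : w + m < 0 -> Q w i m.
Proof.
move=> h x /(NEG h) ->; rewrite (lin0 (Llin _ _)) (lin0 glin) (lin0 (Llin _ _)) //.
Qed.

Lemma Qneg w i m : w < 0 -> Q w i m.
Proof.
move=> h x hx; have h1 := Lshift i m hx; rewrite addrK in h1.
rewrite (NEG h h1) (lin0 glin).
have h2 := Lshift (sg i) m (gW hx); rewrite addrK in h2.
by rewrite (NEG h h2).
Qed.

Lemma Qmono w i m :
  (forall t, @pbw_adm n t -> wt t = w + m -> gs (L i m (mono t)) = L (sg i) m (gs (mono t))) ->
  Q w i m.
Proof.
move=> h x /eigP [P [aP [wP ->]]]; rewrite (lin_sumP _ _ (Llin _ _)) gdef //.
rewrite (lin_sumP _ _ glin) (lin_sumP _ _ (Llin _ _)) /sumP.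
apply: eq_big_seq => p pP; have ap := allP aP p pP.
by rewrite h ?(gadm ap) //; exact/eqP/(allP wP p pP).
Qed.

Lemma gvac : gs vac = vac.
Proof. by have := gadm (t := [::]) isT. Qed.

Lemma Qstep (w : int) i m :
  (forall p, p <= -2 -> Q (w + p) i m) ->
  (forall j p, p <= -2 -> ~~ pbw_le (i, m) (j, p) || (-1 <= m) -> Q w j p) ->
  (forall p, p <= -2 -> Q w i (m + p)) ->
  Q w i m.
Proof.
move=> H1 H2 H3; apply: Qmono => t at_ hw.
case: (boolP (@pbw_adm n ((i, m) :: t))) => [am|nam].
  by rewrite -mono_cons (gadm am) (gadm at_).
case: t at_ hw nam => [|[j p] t'] at_ hw nam.
  have hm : -1 <= m.
    by move: nam; rewrite /pbw_adm /= !andbT; lia.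
  by change (mono [::]) with vac; rewrite gvac !Lvac // (lin0 glin).
have /andP [/andP [hp at1] st] := at_.
have at' : @pbw_adm n t' by rewrite /pbw_adm; apply/andP; split; [exact: at1 | exact: (path_sorted st)].
have hcond : ~~ pbw_le (i, m) (j, p) || (-1 <= m).
  apply: contraT; rewrite negb_or negbK -ltNge => /andP [hle hm2].
  move: nam; rewrite /pbw_adm /= hle /=.
  by move: at_; rewrite /pbw_adm /= => /andP [/andP [-> ->] ->]; rewrite andbT; lia.
have hwt : wt t' = w + m + p by move: hw; rewrite wt_cons /=; lia.
have ex' : L0 (mono t') = (w + m + p)%:~R *: mono t' by rewrite L0_mono hwt.
rewrite (gadm at_) /monoS /= -/(monoS t') -(gadm at') -[Lmode _ _ _ _]/(L _ _ _).
rewrite -!/(L _ _ _).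
rewrite Lcomm (linD glin).
have ez : L0 (L i m (mono t')) = (w + p)%:~R *: L i m (mono t').
  by rewrite (Lshift _ _ ex'); congr (_ *: _); congr (_%:~R); lia.
rewrite (H2 j p hp hcond _ ez) (H1 p hp); last by rewrite ex'; congr (_ *: _); congr (_%:~R); lia.
rewrite [RHS]Lcomm (inj_eq (@perm_inj _ sg)); congr (_ + _).
case: (i =P j) => [_|_]; last by rewrite (lin0 glin).
rewrite (linD glin) !(linZ glin) (H3 p hp) //.
by rewrite ex'; congr (_ *: _); congr (_%:~R); lia.
Qed.

Definition key (wn : nat) (i : 'I_n) (m : int) : nat :=
  if (m <= -2)%R then (i * wn.+1 + absz (m + wn%:Z)%R)%N else (n * wn.+1 + absz (m + 1)%R)%N.

Lemma Qall w i m : Q w i m.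
Proof.
case: (ltrP w 0) => hw; first exact: Qneg.
have [wn ->] : exists wn : nat, w = wn by exists `|w|%N; lia.
elim/ltn_ind: wn i m {w hw} => wn IHw.
suff: forall k i m, (key wn i m < k)%N -> Q wn i m by move=> h i m; apply: (h (key wn i m).+1).
elim=> [//|k IHk] i m hk.
case: (ltrP (wn%:Z + m) 0) => hm; first exact: Qtriv.
apply: Qstep.
- move=> p hp; case: (ltrP (wn%:Z + p) 0) => hwp; first exact: Qneg.
  have [wn' e] : exists wn' : nat, wn%:Z + p = wn' by exists (absz (wn%:Z + p)); lia.
  rewrite e; apply: IHw; lia.
- move=> j p hp hc; case: (ltrP (wn%:Z + p) 0) => hwp; first exact: Qtriv.
  apply: IHk; have hj := ltn_ord j; have hi := ltn_ord i.
  move: hk hc; rewrite /key /pbw_le /= hp; case: ifP => hm2 /=.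
    have -> : (-1 <= m) = false by lia.
    rewrite orbF negb_or negb_and -leqNgt -ltNge => hk /andP [h1 h2].
    case/orP: h2 => h2.
      have hji : (j < i)%N by rewrite ltn_neqAle h1 andbT; apply: contra h2 => /eqP e; apply/eqP; apply: val_inj; rewrite /= e.
      nia.
    move: h1; rewrite leq_eqVlt => /orP [/eqP e|h3]; last nia.
    nia.
  move=> hk _; nia.
- move=> p hp; case: (ltrP (wn%:Z + (m + p)) 0) => h'; first exact: Qtriv.
  apply: IHk; move: hk; rewrite /key; case: ifP => hm2; case: ifP => hm3; have := ltn_ord i; nia.
Qed.

Lemma gL i m x : gs (L i m x) = L (sg i) m (gs x).
Proof.
have [P [aP ->]] := spanP x.
rewrite (lin_sumP _ _ (Llin _ _)) (lin_sumP _ _ glin) (lin_sumP _ _ glin).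
rewrite (lin_sumP _ _ (Llin _ _)); apply: eq_bigr => p _; congr (_ *: _).
have h : L0 (mono p.1) = ((wt p.1 - m) + m)%:~R *: mono p.1 by rewrite subrK L0_mono.
exact: (@Qall (wt p.1 - m) i m (mono p.1) h).
Qed.

Lemma gmono s : gs (mono s) = monoS s.
Proof.
elim: s => [|[i m] s IH]; first exact: gvac.
by rewrite mono_cons gL IH.
Qed.

Lemma gYoms i q y : gs (Y (oms i) q y) = Y (oms (sg i)) q (gs y).
Proof. by have := gL i (q - 1) y; rewrite /L /Lmode subrK. Qed.

End Perm.

Lemma binZ00 : binZ F 0 0 = 1.
Proof. by rewrite /binZ big_ord0 /= divr1. Qed.

Lemma binZ0S j : binZ F 0 j.+1 = 0.
Proof. by rewrite /binZ big_ord_recl /= subr0 mul0r mul0r. Qed.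

Lemma Yassoc a b (nn k : int) w : exists K : nat, forall N : nat, (K <= N)%N ->
  Y (Y a nn b) k w = \sum_(j < N) ((-1) ^+ j * binZ F nn j) *:
        (Y a (0 + nn - j%:Z) (Y b (k + j%:Z) w)
         - signZ F nn *: Y b (nn + k - j%:Z) (Y a (0 + j%:Z) w)).
Proof.
have [K hK] := Yjac a b w 0 nn k; exists (maxn K 1) => N hN.
rewrite -hK; last by apply: leq_trans hN; rewrite leq_maxl.
have : (0 < N)%N by apply: leq_trans hN; rewrite leq_maxr.
case: N {hN} => // N _; rewrite big_ord_recl big1 ?addr0.
  by rewrite binZ00 scale1r /= add0r.
by move=> j _; rewrite binZ0S scale0r.
Qed.

Section Perm2.
Variable sg : 'S_n.

Lemma gY_mono s k v : gs sg (Y (mono s) k v) = Y (monoS sg s) k (gs sg v).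
Proof.
elim: s k v => [|[i m] s IH] k v.
  rewrite /monoS /= !Yvac; case: (k == -1) => //; exact: (lin0 (glin sg)).
have [K1 h1] := Yassoc (oms i) (mono s) (m + 1) k v.
have [K2 h2] := Yassoc (oms (sg i)) (monoS sg s) (m + 1) k (gs sg v).
rewrite mono_cons /L /Lmode (h1 (maxn K1 K2)) ?leq_maxl //.
rewrite /monoS /= -/(monoS sg s) /Lmode (h2 (maxn K1 K2)) ?leq_maxr //.
rewrite (lin_sum (glin sg)); apply: eq_bigr => j _.
rewrite (linZ (glin sg)) (linB (glin sg)) (linZ (glin sg)).
by rewrite !IH !gYoms IH.
Qed.

Lemma gYall u k v : gs sg (Y u k v) = Y (gs sg u) k (gs sg v).
Proof.
have [P [aP ->]] := spanP u.
rewrite gdef // (lin_sumP _ _ (Ylin1 k v)) (lin_sumP _ _ (glin sg)).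
rewrite (lin_sumP _ _ (Ylin1 _ _)); apply: eq_bigr => p _.
by rewrite gY_mono.
Qed.

Lemma gom : gs sg om = om.
Proof.
rewrite (lin_sum (glin sg)).
have h : forall i, gs sg (oms i) = oms (sg i) by move=> i; rewrite -omsE gmono; exact: omsE.
under eq_bigr => i _ do rewrite h.
by rewrite [RHS](reindex_inj (@perm_inj _ sg)).
Qed.
End Perm2.

Lemma gs_inv (sg : 'S_n) v : gs (sg^-1)%g (gs sg v) = v.
Proof.
have [P [aP ->]] := spanP v.
rewrite gdef // (lin_sumP _ _ (glin _)); apply: eq_bigr => p _.
rewrite /monoS gmono /monoS /perm_mono -map_comp.
congr (_ *: mono _); rewrite -[RHS]map_id; apply: eq_map => [[i m]] /=.
by rewrite permK.
Qed.

Lemma part1 (sg : 'S_n) : exists g : V -> V,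
     is_VOA_aut Y om g /\ forall s, g (mono s) = mono (perm_mono sg s).
Proof.
exists (gs sg); split; last exact: gmono.
split; first exact: glin.
split; first by exists (gs (sg^-1)%g) => v; [exact: gs_inv | by have := gs_inv (sg^-1)%g v; rewrite invgK].
split; [exact: gYall | exact: gom].
Qed.

End Main.

Theorem mainTheorem1 (R : realType) (c : CC R) (n : nat) (hn : (1 <= n)%N)
    (V : lmodType (CC R)) (Y : V -> int -> V -> V) (vac : V) (oms : 'I_n -> V)
    (hVOA : VOA_axioms Y vac (\sum_(i < n) oms i) (n%:R * c))
    (hV : is_univ_vir_tensor Y vac oms c) :
  (* every permutation of tensor factors acts by a VOA automorphism *)
  (forall sg : 'S_n, exists g : V -> V,
     is_VOA_aut Y (\sum_(i < n) oms i) g /\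
     forall s, g (vir_mono Y vac oms s) = vir_mono Y vac oms (perm_mono sg s)) /\
  (* every VOA automorphism is such a permutation action *)
  (forall g : V -> V, is_VOA_aut Y (\sum_(i < n) oms i) g ->
     exists sg : 'S_n,
       forall s, g (vir_mono Y vac oms s) = vir_mono Y vac oms (perm_mono sg s)) /\
  (* and the action of S_n is faithful *)
  (forall sg tau : 'S_n,
     (forall s, vir_mono Y vac oms (perm_mono sg s) = vir_mono Y vac oms (perm_mono tau s)) ->
     sg = tau).
Proof.
split; first exact: (part1 hVOA hV).
split; first exact: (aut_perm hVOA hV).
exact: (faithful hVOA hV).
Qed.
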